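(* Let $\Pi$ be a safety problem. If $\Pi$ has a proof in the incremental forward-backward proof system with prophecy $\mathbf{FBPI}$, then $\Pi$ is safe.
   Context: A first-order vocabulary $\Sigma$ consists of constant, function and relation symbols; $\Sigma'=\{a' : a\in\Sigma\}$ is a disjoint copy, and for a formula $\varphi$, $\varphi'$ denotes $\varphi$ with every vocabulary symbol replaced by its primed copy. A state is a first-order structure over the vocabulary. A safety problem over $\Sigma$ is a triple $(\iota,\tau,\beta)$, where $\iota$ (initial states) and $\beta$ (bad states) are closed formulas over $\Sigma$ and $\tau$ (transitions) is a closed formula over $\Sigma\uplus\Sigma'$. A pair of states $(s,t)$ over a common domain is a transition if the structure interpreting unprimed symbols as in $s$ and primed ones as in $t$ satisfies $\tau$. A trace is a finite sequence of states over a common domain whose consecutive states form transitions; the problem is safe if there is no trace $s_0,\dots,s_k$ with $s_0\models\iota$, $s_k\models\beta$. $A\Rightarrow B$ means the implication $A\to B$ is valid; $\tau^{-1}$ is $\tau$ with each symbol and its primed counterpart swapped. Proofs: a proof of $\Pi$ in a system is a finite tree whose nodes are safety problems (possibly over different vocabularies), whose root is $\Pi$, and in which each node together with its children is an instance of one of the system's rules, with side conditions valid. $\mathbf{FBPI}$ has the rules (for a safety problem over vocabulary $\Sigma$, $\varphi$ ranging over closed formulas over $\Sigma$ in the first four): (Ind): no premises; conclusion $(\iota,\tau,\neg\varphi)$; side conditions $\iota\Rightarrow\varphi$ and $\varphi\wedge\tau\Rightarrow\varphi'$. (Cons): premise $(\iota,\tau,\neg\varphi)$; conclusion $(\iota,\tau,\beta)$;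 side condition $\varphi\Rightarrow\neg\beta$. (Inc): premises $(\iota,\tau,\neg\varphi)$ and $(\iota\wedge\varphi,\ \tau\wedge\varphi\wedge\varphi',\ \beta\wedge\varphi)$; conclusion $(\iota,\tau,\beta)$. (Rev): premise $(\beta,\tau^{-1},\iota)$; conclusion $(\iota,\tau,\beta)$. (Proph): for $\Pi=(\iota,\tau,\beta)$ over $\Sigma$, a fresh constant symbol $w$, a fresh unary relation symbol $m$, and a formula $\varphi(x)$ over $\Sigma$ with free variable $x$: premises $\Pi^{\mathrm{sound}}_\varphi$ and $\Pi^w_\varphi$; conclusion $\Pi$. Here $\varphi(w)$ is $\varphi$ with $x$ replaced by $w$, $\Pi^w_\varphi=\big(\iota\wedge\varphi(w),\ \varphi(w)\wedge\tau\wedge w'=w\wedge(\varphi(w))',\ \beta\wedge\varphi(w)\big)$ over $\Sigma\cup\{w\}$, and $\Pi^{\mathrm{sound}}_\varphi=\big(\iota\wedge\forall x.\,\varphi(x)\to m(x),\ \tau\wedge\forall x.\,(m(x)\wedge\varphi(x)\wedge\varphi'(x))\to m'(x),\ \beta\wedge\forall x.\,\varphi(x)\to\neg m(x)\big)$ over $\Sigma\cup\{m\}$. *)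

(* Defs.v *)
From Stdlib Require Import Arith.
From Stdlib Require Fin.


Record vocab : Type := Vocab {
  fsym : nat -> Type;
  rsym : nat -> Type
}.

(* Disjoint union of vocabularies. [vplus V V] is  Sigma ⊎ Sigma'  with
   [inl] = unprimed symbols and [inr] = primed symbols. *)
Definition vplus (V W : vocab) : vocab :=
  Vocab (fun n => (fsym V n + fsym W n)%type) (fun n => (rsym V n + rsym W n)%type).

Definition vconst : vocab :=
  Vocab (fun n => match n with 0 => unit | _ => Empty_set end) (fun _ => Empty_set).

Definition vunrel : vocab :=
  Vocab (fun _ => Empty_set) (fun n => match n with 1 => unit | _ => Empty_set end).

Inductive term (V : vocab) : Type :=
| Var : nat -> term V
| App : forall n, fsym V n -> (Fin.t n -> term V) -> term V.

Inductive form (V : vocab) : Type :=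
| FFalse : form V
| FTrue : form V
| FEq : term V -> term V -> form V
| FRel : forall n, rsym V n -> (Fin.t n -> term V) -> form V
| FNot : form V -> form V
| FAnd : form V -> form V -> form V
| FOr : form V -> form V -> form V
| FImp : form V -> form V -> form V
| FAll : nat -> form V -> form V
| FEx : nat -> form V -> form V.

Arguments Var {V}.
Arguments App {V} n _ _.
Arguments FEq {V}.
Arguments FRel {V} n _ _.
Arguments FNot {V}.
Arguments FAnd {V}.
Arguments FOr {V}.
Arguments FImp {V}.
Arguments FAll {V}.
Arguments FEx {V}.
Arguments FFalse {V}.
Arguments FTrue {V}.

Fixpoint tfree {V : vocab} (x : nat) (t : term V) : Prop :=
  match t with
  | Var y => x = y
  | App _ _ a => exists i, tfree x (a i)
  end.

Fixpoint ffree {V : vocab} (x : nat) (p : form V) : Prop :=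
  match p with
  | FFalse | FTrue => False
  | FEq t1 t2 => tfree x t1 \/ tfree x t2
  | FRel _ _ a => exists i, tfree x (a i)
  | FNot q => ffree x q
  | FAnd q r | FOr q r | FImp q r => ffree x q \/ ffree x r
  | FAll y q | FEx y q => x <> y /\ ffree x q
  end.

Definition closed {V : vocab} (p : form V) : Prop := forall x, ~ ffree x p.

Definition only_free {V : vocab} (x : nat) (p : form V) : Prop :=
  forall y, ffree y p -> y = x.

(* substitution of a (closed) term c for the free occurrences of x *)
Fixpoint tsubst {V : vocab} (x : nat) (c : term V) (t : term V) : term V :=
  match t with
  | Var y => if Nat.eqb x y then c else Var y
  | App n f a => App n f (fun i => tsubst x c (a i))
  end.

Fixpoint fsubst {V : vocab} (x : nat) (c : term V) (p : form V) : form V :=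
  match p with
  | FFalse => FFalse
  | FTrue => FTrue
  | FEq t1 t2 => FEq (tsubst x c t1) (tsubst x c t2)
  | FRel n r a => FRel n r (fun i => tsubst x c (a i))
  | FNot q => FNot (fsubst x c q)
  | FAnd q r => FAnd (fsubst x c q) (fsubst x c r)
  | FOr q r => FOr (fsubst x c q) (fsubst x c r)
  | FImp q r => FImp (fsubst x c q) (fsubst x c r)
  | FAll y q => if Nat.eqb x y then FAll y q else FAll y (fsubst x c q)
  | FEx y q => if Nat.eqb x y then FEx y q else FEx y (fsubst x c q)
  end.

Record vmap (V W : vocab) : Type := VMap {
  mapf : forall n, fsym V n -> fsym W n;
  mapr : forall n, rsym V n -> rsym W n
}.
Arguments VMap {V W} _ _.
Arguments mapf {V W} _ n _.
Arguments mapr {V W} _ n _.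

Fixpoint tren {V W : vocab} (m : vmap V W) (t : term V) : term W :=
  match t with
  | Var y => Var y
  | App n f a => App n (mapf m n f) (fun i => tren m (a i))
  end.

Fixpoint fren {V W : vocab} (m : vmap V W) (p : form V) : form W :=
  match p with
  | FFalse => FFalse
  | FTrue => FTrue
  | FEq t1 t2 => FEq (tren m t1) (tren m t2)
  | FRel n r a => FRel n (mapr m n r) (fun i => tren m (a i))
  | FNot q => FNot (fren m q)
  | FAnd q r => FAnd (fren m q) (fren m r)
  | FOr q r => FOr (fren m q) (fren m r)
  | FImp q r => FImp (fren m q) (fren m r)
  | FAll y q => FAll y (fren m q)
  | FEx y q => FEx y (fren m q)
  end.

Definition vinl V W : vmap V (vplus V W) :=
  @VMap V (vplus V W) (fun n (f : fsym V n) => (inl f : fsym (vplus V W) n))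
                      (fun n (r : rsym V n) => (inl r : rsym (vplus V W) n)).
Definition vinr V W : vmap W (vplus V W) :=
  @VMap W (vplus V W) (fun n (f : fsym W n) => (inr f : fsym (vplus V W) n))
                      (fun n (r : rsym W n) => (inr r : rsym (vplus V W) n)).
Definition vswap V : vmap (vplus V V) (vplus V V) :=
  @VMap (vplus V V) (vplus V V)
       (fun n (f : fsym (vplus V V) n) => (match f with inl g => inr g | inr g => inl g end : fsym (vplus V V) n))
       (fun n (r : rsym (vplus V V) n) => (match r with inl g => inr g | inr g => inl g end : rsym (vplus V V) n)).
Arguments vinl : clear implicits.
Arguments vinr : clear implicits.
Arguments vswap : clear implicits.
Definition vpair {V W : vocab} (m : vmap V W) : vmap (vplus V V) (vplus W W) :=
  @VMap (vplus V V) (vplus W W)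
       (fun n (f : fsym (vplus V V) n) => (match f with inl g => inl (mapf m n g) | inr g => inr (mapf m n g) end : fsym (vplus W W) n))
       (fun n (r : rsym (vplus V V) n) => (match r with inl g => inl (mapr m n g) | inr g => inr (mapr m n g) end : rsym (vplus W W) n)).

Definition unprimed {V : vocab} (p : form V) : form (vplus V V) := fren (vinl V V) p.
Definition primed {V : vocab} (p : form V) : form (vplus V V) := fren (vinr V V) p.
Definition tinv {V : vocab} (t : form (vplus V V)) : form (vplus V V) := fren (vswap V) t.

Record structure (V : vocab) (D : Type) : Type := Struct {
  ifun : forall n, fsym V n -> (Fin.t n -> D) -> D;
  irel : forall n, rsym V n -> (Fin.t n -> D) -> Prop
}.
Arguments ifun {V D} _ n _ _.
Arguments irel {V D} _ n _ _.

Definition upd {D : Type} (e : nat -> D) (x : nat) (d : D) : nat -> D :=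
  fun y => if Nat.eqb x y then d else e y.

Fixpoint eval {V : vocab} {D : Type} (s : structure V D) (e : nat -> D) (t : term V) : D :=
  match t with
  | Var y => e y
  | App n f a => ifun s n f (fun i => eval s e (a i))
  end.

Fixpoint sat {V : vocab} {D : Type} (s : structure V D) (e : nat -> D) (p : form V) : Prop :=
  match p with
  | FFalse => False
  | FTrue => True
  | FEq t1 t2 => eval s e t1 = eval s e t2
  | FRel n r a => irel s n r (fun i => eval s e (a i))
  | FNot q => ~ sat s e q
  | FAnd q r => sat s e q /\ sat s e r
  | FOr q r => sat s e q \/ sat s e r
  | FImp q r => sat s e q -> sat s e r
  | FAll y q => forall d : D, sat s (upd e y d) q
  | FEx y q => exists d : D, sat s (upd e y d) q
  end.

Definition models {V : vocab} {D : Type} (s : structure V D) (p : form V) : Prop :=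
  forall e : nat -> D, sat s e p.

Definition valid {V : vocab} (p : form V) : Prop :=
  forall (D : Type), inhabited D -> forall (s : structure V D), models s p.

Definition entails {V : vocab} (a b : form V) : Prop := valid (FImp a b).

Definition pairS {V : vocab} {D : Type} (s t : structure V D) : structure (vplus V V) D :=
  Struct (vplus V V) D
    (fun n f => match f with inl g => ifun s n g | inr g => ifun t n g end)
    (fun n r => match r with inl g => irel s n g | inr g => irel t n g end).

Record sproblem (V : vocab) : Type := SP {
  sp_init : form V;
  sp_trans : form (vplus V V);
  sp_bad : form V
}.
Arguments SP {V} _ _ _.
Arguments sp_init {V} _.
Arguments sp_trans {V} _.
Arguments sp_bad {V} _.

Definition is_sproblem {V : vocab} (P : sproblem V) : Prop :=
  closed (sp_init P) /\ closed (sp_trans P) /\ closed (sp_bad P).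

Definition is_transition {V : vocab} {D : Type} (tau : form (vplus V V)) (s t : structure V D) : Prop :=
  models (pairS s t) tau.

Definition safe {V : vocab} (P : sproblem V) : Prop :=
  ~ exists (D : Type) (_ : inhabited D) (k : nat) (s : nat -> structure V D),
      models (s 0) (sp_init P) /\ models (s k) (sp_bad P) /\
      (forall i, i < k -> is_transition (sp_trans P) (s i) (s (S i))).

Definition wconst V : term (vplus V vconst) :=
  @App (vplus V vconst) 0 (inr tt) (Fin.case0 (fun _ => term (vplus V vconst))).

Definition matom V (x : nat) : form (vplus V vunrel) :=
  @FRel (vplus V vunrel) 1 (inr tt) (fun _ => Var x).

Definition proph_w {V : vocab} (P : sproblem V) (x : nat) (phi : form V) : sproblem (vplus V vconst) :=
  let Vw := vplus V vconst in
  let phiw : form Vw := fsubst x (wconst V) (fren (vinl V vconst) phi) in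
  SP (FAnd (fren (vinl V vconst) (sp_init P)) phiw)
     (FAnd (FAnd (FAnd (unprimed phiw) (fren (vpair (vinl V vconst)) (sp_trans P)))
                 (FEq (tren (vinr Vw Vw) (wconst V)) (tren (vinl Vw Vw) (wconst V))))
           (primed phiw))
     (FAnd (fren (vinl V vconst) (sp_bad P)) phiw).

Definition proph_sound {V : vocab} (P : sproblem V) (x : nat) (phi : form V) : sproblem (vplus V vunrel) :=
  let Vm := vplus V vunrel in
  let phim : form Vm := fren (vinl V vunrel) phi in
  SP (FAnd (fren (vinl V vunrel) (sp_init P)) (FAll x (FImp phim (matom V x))))
     (FAnd (fren (vpair (vinl V vunrel)) (sp_trans P))
           (FAll x (FImp (FAnd (FAnd (unprimed (matom V x)) (unprimed phim)) (primed phim))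
                         (primed (matom V x)))))
     (FAnd (fren (vinl V vunrel) (sp_bad P)) (FAll x (FImp phim (FNot (matom V x))))).

Inductive FBPI_proof : forall {V : vocab}, sproblem V -> Prop :=
| R_Ind : forall V (iota : form V) (tau : form (vplus V V)) (phi : form V),
    is_sproblem (SP iota tau (FNot phi)) ->
    closed phi ->
    entails iota phi ->
    entails (FAnd (unprimed phi) tau) (primed phi) ->
    FBPI_proof (SP iota tau (FNot phi))
| R_Cons : forall V (iota : form V) (tau : form (vplus V V)) (beta phi : form V),
    is_sproblem (SP iota tau beta) ->
    closed phi ->
    entails phi (FNot beta) ->
    FBPI_proof (SP iota tau (FNot phi)) ->
    FBPI_proof (SP iota tau beta)
| R_Inc : forall V (iota : form V) (tau : form (vplus V V)) (beta phi : form V),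
    is_sproblem (SP iota tau beta) ->
    closed phi ->
    FBPI_proof (SP iota tau (FNot phi)) ->
    FBPI_proof (SP (FAnd iota phi) (FAnd (FAnd tau (unprimed phi)) (primed phi)) (FAnd beta phi)) ->
    FBPI_proof (SP iota tau beta)
| R_Rev : forall V (iota : form V) (tau : form (vplus V V)) (beta : form V),
    is_sproblem (SP iota tau beta) ->
    FBPI_proof (SP beta (tinv tau) iota) ->
    FBPI_proof (SP iota tau beta)
| R_Proph : forall V (P : sproblem V) (x : nat) (phi : form V),
    is_sproblem P ->
    only_free x phi ->
    FBPI_proof (proph_sound P x phi) ->
    FBPI_proof (proph_w P x phi) ->
    FBPI_proof P.

(* Main.v *)
Require Import Defs.
From Stdlib Require Import Arith Lia Classical FunctionalExtensionality.

Section Gen.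

Definition pull {V W : vocab} {D : Type} (s : structure W D) (m : vmap V W) : structure V D :=
  Struct V D (fun n f => ifun s n (mapf m n f)) (fun n r => irel s n (mapr m n r)).

Lemma eval_ren {V W : vocab} {D : Type} (s : structure W D) (m : vmap V W) e (t : term V) :
  eval s e (tren m t) = eval (pull s m) e t.
Proof.
  induction t as [y|n f a IH]; simpl; auto.
  f_equal. apply functional_extensionality; intro i; auto.
Qed.

Lemma sat_ren {V W : vocab} {D : Type} (s : structure W D) (m : vmap V W) (p : form V) :
  forall e, sat s e (fren m p) <-> sat (pull s m) e p.
Proof.
  induction p; intro e; simpl; try tauto.
  - rewrite !eval_ren; tauto.
  - replace (fun i => eval s e (tren m (t i))) with (fun i => eval (pull s m) e (t i)).
    + tauto.
    + apply functional_extensionality; intro i; rewrite eval_ren; auto.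
  - rewrite IHp; tauto.
  - rewrite IHp1, IHp2; tauto.
  - rewrite IHp1, IHp2; tauto.
  - rewrite IHp1, IHp2; tauto.
  - split; intros H d; apply IHp; auto.
  - split; intros [d H]; exists d; apply IHp; auto.
Qed.

Definition seqv {V : vocab} {D : Type} (s1 s2 : structure V D) : Prop :=
  (forall n f a, ifun s1 n f a = ifun s2 n f a) /\ (forall n r a, irel s1 n r a <-> irel s2 n r a).

Lemma eval_seqv {V : vocab} {D : Type} (s1 s2 : structure V D) e (t : term V) :
  seqv s1 s2 -> eval s1 e t = eval s2 e t.
Proof.
  intros [Hf Hr]. induction t as [y|n f a IH]; simpl; auto.
  rewrite Hf. f_equal. apply functional_extensionality; intro i; auto.
Qed.

Lemma sat_seqv {V : vocab} {D : Type} (s1 s2 : structure V D) (p : form V) :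
  seqv s1 s2 -> forall e, sat s1 e p <-> sat s2 e p.
Proof.
  intros HS. induction p; intro e; simpl; try tauto.
  - rewrite !(eval_seqv s1 s2) by auto; tauto.
  - replace (fun i => eval s1 e (t i)) with (fun i => eval s2 e (t i)).
    + apply (proj2 HS).
    + apply functional_extensionality; intro i; rewrite (eval_seqv s1 s2); auto.
  - rewrite IHp; tauto.
  - rewrite IHp1, IHp2; tauto.
  - rewrite IHp1, IHp2; tauto.
  - rewrite IHp1, IHp2; tauto.
  - split; intros H d; apply IHp; auto.
  - split; intros [d H]; exists d; apply IHp; auto.
Qed.

Lemma sat_unprimed {V : vocab} {D : Type} (A B : structure V D) p e :
  sat (pairS A B) e (unprimed p) <-> sat A e p.
Proof.
  unfold unprimed. rewrite sat_ren. apply sat_seqv.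
  split; intros; reflexivity.
Qed.

Lemma sat_primed {V : vocab} {D : Type} (A B : structure V D) p e :
  sat (pairS A B) e (primed p) <-> sat B e p.
Proof.
  unfold primed. rewrite sat_ren. apply sat_seqv.
  split; intros; reflexivity.
Qed.

Lemma sat_tinv {V : vocab} {D : Type} (A B : structure V D) p e :
  sat (pairS A B) e (tinv p) <-> sat (pairS B A) e p.
Proof.
  unfold tinv. rewrite sat_ren. apply sat_seqv.
  split; intros n f; destruct f; intros; reflexivity.
Qed.

Lemma upd_same {D} (e : nat -> D) x d : upd e x d x = d.
Proof. unfold upd; rewrite Nat.eqb_refl; auto. Qed.

Lemma eval_agree {V : vocab} {D : Type} (s : structure V D) (t : term V) :
  forall e1 e2, (forall y, tfree y t -> e1 y = e2 y) -> eval s e1 t = eval s e2 t.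
Proof.
  induction t as [y|n f a IH]; simpl; intros e1 e2 H.
  - apply H; reflexivity.
  - f_equal. apply functional_extensionality; intro i. apply IH.
    intros y Hy; apply H; exists i; auto.
Qed.

Lemma sat_agree {V : vocab} {D : Type} (s : structure V D) (p : form V) :
  forall e1 e2, (forall y, ffree y p -> e1 y = e2 y) -> (sat s e1 p <-> sat s e2 p).
Proof.
  induction p; simpl; intros e1 e2 H; try tauto.
  - rewrite (eval_agree s t e1 e2), (eval_agree s t0 e1 e2); auto; tauto.
  - replace (fun i => eval s e1 (t i)) with (fun i => eval s e2 (t i)); [tauto|].
    apply functional_extensionality; intro i. symmetry; apply eval_agree.
    intros y Hy; apply H; exists i; auto.
  - rewrite (IHp e1 e2); auto; tauto.
  - rewrite (IHp1 e1 e2), (IHp2 e1 e2); auto; tauto.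
  - rewrite (IHp1 e1 e2), (IHp2 e1 e2); auto; tauto.
  - rewrite (IHp1 e1 e2), (IHp2 e1 e2); auto; tauto.
  - assert (HH : forall d, sat s (upd e1 n d) p <-> sat s (upd e2 n d) p).
    { intro d; apply IHp. intros y Hy; unfold upd.
      destruct (Nat.eqb_spec n y); auto. }
    split; intros H1 d; apply HH; auto.
  - assert (HH : forall d, sat s (upd e1 n d) p <-> sat s (upd e2 n d) p).
    { intro d; apply IHp. intros y Hy; unfold upd.
      destruct (Nat.eqb_spec n y); auto. }
    split; intros [d H1]; exists d; apply HH; auto.
Qed.

Lemma sat_closed {V : vocab} {D : Type} (s : structure V D) (p : form V) e1 e2 :
  closed p -> (sat s e1 p <-> sat s e2 p).
Proof. intro H; apply sat_agree; intros y Hy; exfalso; apply (H y Hy). Qed.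

Lemma eval_subst {V : vocab} {D : Type} (s : structure V D) x c (t : term V) e :
  eval s e (tsubst x c t) = eval s (upd e x (eval s e c)) t.
Proof.
  induction t as [y|n f a IH]; simpl.
  - unfold upd. destruct (Nat.eqb x y); auto.
  - f_equal. apply functional_extensionality; intro i; auto.
Qed.

Lemma sat_subst {V : vocab} {D : Type} (s : structure V D) x c
  (Hc : forall e1 e2, eval s e1 c = eval s e2 c) (p : form V) :
  forall e, sat s e (fsubst x c p) <-> sat s (upd e x (eval s e c)) p.
Proof.
  induction p; intro e; simpl; try tauto.
  - rewrite !eval_subst; tauto.
  - replace (fun i => eval s e (tsubst x c (t i))) with
      (fun i => eval s (upd e x (eval s e c)) (t i)); [tauto|].
    apply functional_extensionality; intro i; rewrite eval_subst; auto.
  - rewrite IHp; tauto.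
  - rewrite IHp1, IHp2; tauto.
  - rewrite IHp1, IHp2; tauto.
  - rewrite IHp1, IHp2; tauto.
  - destruct (Nat.eqb_spec x n).
    + subst. simpl. split; intros H d.
      * replace (upd (upd e n (eval s e c)) n d) with (upd e n d); auto.
        apply functional_extensionality; intro y; unfold upd; destruct (Nat.eqb n y); auto.
      * specialize (H d).
        replace (upd (upd e n (eval s e c)) n d) with (upd e n d) in H; auto.
        apply functional_extensionality; intro y; unfold upd; destruct (Nat.eqb n y); auto.
    + simpl.
      assert (HH : forall d, sat s (upd e n d) (fsubst x c p) <-> sat s (upd (upd e x (eval s e c)) n d) p).
      { intro d. rewrite IHp. rewrite (Hc (upd e n d) e).
        replace (upd (upd e n d) x (eval s e c)) with (upd (upd e x (eval s e c)) n d); [tauto|].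
        apply functional_extensionality; intro y; unfold upd.
        destruct (Nat.eqb_spec n y), (Nat.eqb_spec x y); subst; auto; congruence. }
      split; intros H d; apply HH; auto.
  - destruct (Nat.eqb_spec x n).
    + subst. simpl. split; intros [d H]; exists d.
      * replace (upd (upd e n (eval s e c)) n d) with (upd e n d); auto.
        apply functional_extensionality; intro y; unfold upd; destruct (Nat.eqb n y); auto.
      * replace (upd (upd e n (eval s e c)) n d) with (upd e n d) in H; auto.
        apply functional_extensionality; intro y; unfold upd; destruct (Nat.eqb n y); auto.
    + simpl.
      assert (HH : forall d, sat s (upd e n d) (fsubst x c p) <-> sat s (upd (upd e x (eval s e c)) n d) p).
      { intro d. rewrite IHp. rewrite (Hc (upd e n d) e).
        replace (upd (upd e n d) x (eval s e c)) with (upd (upd e x (eval s e c)) n d); [tauto|].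
        apply functional_extensionality; intro y; unfold upd.
        destruct (Nat.eqb_spec n y), (Nat.eqb_spec x y); subst; auto; congruence. }
      split; intros [d H]; exists d; apply HH; auto.
Qed.

End Gen.

Definition mrel {V : vocab} {D : Type} (s : nat -> structure V D) (phi : form V) (x : nat)
  (e0 : nat -> D) (i : nat) (n : nat) : (Fin.t n -> D) -> Prop :=
  match n return (Fin.t n -> D) -> Prop with
  | 0 => fun _ => False
  | S n' => fun a => forall j, j <= i -> sat (s j) (upd e0 x (a (@Fin.F1 n'))) phi
  end.

Definition smk {V : vocab} {D : Type} (s : nat -> structure V D) (phi : form V) (x : nat)
  (e0 : nat -> D) (i : nat) : structure (vplus V vunrel) D :=
  Struct (vplus V vunrel) D
    (fun n f => match f with inl g => ifun (s i) n g | inr g => match g with end end)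
    (fun n r => match r with inl g => irel (s i) n g | inr _ => mrel s phi x e0 i n end).

Definition swk {V : vocab} {D : Type} (s : nat -> structure V D) (d : D) (i : nat)
  : structure (vplus V vconst) D :=
  Struct (vplus V vconst) D
    (fun n f => match f with inl g => ifun (s i) n g | inr _ => fun _ => d end)
    (fun n r => match r with inl g => irel (s i) n g | inr g => match g with end end).

Lemma safe_Ind V (iota : form V) tau phi :
  entails iota phi -> entails (FAnd (unprimed phi) tau) (primed phi) ->
  safe (SP iota tau (FNot phi)).
Proof.
  intros H1 H2 [D [[d0] [k [s [Hi [Hb Ht]]]]]]; simpl in *.
  assert (forall i, i <= k -> models (s i) phi).
  { induction i; intros Hik e.
    - apply (H1 D (inhabits d0) (s 0) e); apply Hi.
    - apply (sat_primed (s i) (s (S i))).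
      apply (H2 D (inhabits d0) (pairS (s i) (s (S i))) e). simpl. split.
      + apply sat_unprimed. apply IHi; lia.
      + apply Ht; lia. }
  apply (Hb (fun _ => d0)). apply H; lia.
Qed.

Lemma safe_Cons V (iota : form V) tau beta phi :
  entails phi (FNot beta) -> safe (SP iota tau (FNot phi)) -> safe (SP iota tau beta).
Proof.
  intros H1 H2 [D [[d0] [k [s [Hi [Hb Ht]]]]]]; simpl in *.
  apply H2. exists D, (inhabits d0), k, s; simpl; repeat split; auto.
  intros e He. apply (H1 D (inhabits d0) (s k) e He). apply Hb.
Qed.

Lemma safe_Inc V (iota : form V) tau beta phi :
  closed phi ->
  safe (SP iota tau (FNot phi)) ->
  safe (SP (FAnd iota phi) (FAnd (FAnd tau (unprimed phi)) (primed phi)) (FAnd beta phi)) ->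
  safe (SP iota tau beta).
Proof.
  intros Hc H1 H2 [D [[d0] [k [s [Hi [Hb Ht]]]]]]; simpl in *.
  destruct (classic (exists j, j <= k /\ ~ models (s j) phi)) as [[j [Hj Hn]]|Hall].
  - apply H1. exists D, (inhabits d0), j, s; simpl; repeat split; auto.
    + intros e He. apply Hn. intro e'. apply (sat_closed _ _ e e' Hc); auto.
    + intros i Hij; apply Ht; lia.
  - assert (Hm : forall j, j <= k -> models (s j) phi).
    { intros j Hj. apply NNPP. intro Hn; apply Hall; eauto. }
    apply H2. exists D, (inhabits d0), k, s; simpl; repeat split; auto.
    all: try solve [apply Hi | apply Hb | apply Hm; lia | apply Ht; auto
                   | apply sat_unprimed; apply Hm; lia | apply sat_primed; apply Hm; lia].
Qed.

Lemma safe_Rev V (iota : form V) tau beta :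
  safe (SP beta (tinv tau) iota) -> safe (SP iota tau beta).
Proof.
  intros H1 [D [[d0] [k [s [Hi [Hb Ht]]]]]]; simpl in *.
  apply H1. exists D, (inhabits d0), k, (fun i => s (k - i)); simpl; repeat split.
  - rewrite Nat.sub_0_r; auto.
  - rewrite Nat.sub_diag; auto.
  - intros i Hik e. apply sat_tinv.
    replace (k - i) with (S (k - S i)) by lia. apply Ht; lia.
Qed.

Lemma safe_Proph V (P : sproblem V) x phi :
  only_free x phi -> safe (proph_sound P x phi) -> safe (proph_w P x phi) -> safe P.
Proof.
  intros Hof Hs Hw [D [[d0] [k [s [Hi [Hb Ht]]]]]].
  set (e0 := fun _ : nat => d0).
  assert (Hphi : forall (A : structure V D) e d, sat A (upd e x d) phi <-> sat A (upd e0 x d) phi).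
  { intros A e d; apply sat_agree; intros y Hy; apply Hof in Hy; subst; rewrite !upd_same; auto. }
  destruct (classic (exists d, forall j, j <= k -> sat (s j) (upd e0 x d) phi)) as [[d Hd]|Hnd].
  - assert (Hsw : forall i p e, sat (swk s d i) e (fren (vinl V vconst) p) <-> sat (s i) e p).
    { intros; rewrite sat_ren; apply sat_seqv; split; intros; reflexivity. }
    assert (Hpw : forall i p e, sat (pairS (swk s d i) (swk s d (S i))) e (fren (vpair (vinl V vconst)) p)
                                <-> sat (pairS (s i) (s (S i))) e p).
    { intros; rewrite sat_ren; apply sat_seqv; split; intros n f; destruct f; intros; reflexivity. }
    assert (Hphiw : forall i e, sat (swk s d i) e (fsubst x (wconst V) (fren (vinl V vconst) phi))
                                <-> sat (s i) (upd e0 x d) phi).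
    { intros i e. rewrite sat_subst by (intros; reflexivity).
      change (eval (swk s d i) e (wconst V)) with d. rewrite Hsw. apply Hphi. }
    apply Hw. exists D, (inhabits d0), k, (swk s d). unfold proph_w; cbn [sp_init sp_trans sp_bad].
    split; [|split].
    + intro e; split; [apply Hsw, Hi | apply Hphiw, Hd; lia].
    + intro e; split; [apply Hsw, Hb | apply Hphiw, Hd; lia].
    + intros i Hik e. split; [split; [split|]|].
      * apply sat_unprimed, Hphiw, Hd; lia.
      * apply Hpw, Ht; auto.
      * reflexivity.
      * apply sat_primed, Hphiw, Hd; lia.
  - exfalso. apply Hs.
    assert (Hsm : forall i p e, sat (smk s phi x e0 i) e (fren (vinl V vunrel) p) <-> sat (s i) e p).
    { intros; rewrite sat_ren; apply sat_seqv; split; intros; reflexivity. }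
    assert (Hpm : forall i p e, sat (pairS (smk s phi x e0 i) (smk s phi x e0 (S i))) e
                                  (fren (vpair (vinl V vunrel)) p)
                                <-> sat (pairS (s i) (s (S i))) e p).
    { intros; rewrite sat_ren; apply sat_seqv; split; intros n f; destruct f; intros; reflexivity. }
    exists D, (inhabits d0), k, (smk s phi x e0). unfold proph_sound; cbn [sp_init sp_trans sp_bad].
    split; [|split].
    + intro e; split; [apply Hsm, Hi|].
      intros d Hd. apply Hsm in Hd. simpl. rewrite upd_same. intros j Hj.
      assert (j = 0) by lia; subst. apply (Hphi _ e); auto.
    + intro e; split; [apply Hsm, Hb|].
      intros d Hd Hm. simpl in Hm. rewrite upd_same in Hm. apply Hnd; exists d; auto.
    + intros i Hik e. split; [apply Hpm, Ht; auto|].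
      intros d [[Hm Hp1] Hp2]. apply sat_primed.
      apply sat_unprimed in Hm. apply sat_primed in Hp2.
      simpl in Hm |- *. rewrite upd_same in *. intros j Hj.
      destruct (Nat.eq_dec j (S i)).
      * subst. apply Hsm in Hp2. apply (Hphi _ e); auto.
      * apply Hm; lia.
Qed.

Lemma soundness V (P : sproblem V) : FBPI_proof P -> safe P.
Proof.
  induction 1.
  - apply safe_Ind; auto.
  - eapply safe_Cons; eauto.
  - eapply safe_Inc; eauto.
  - apply safe_Rev; auto.
  - eapply safe_Proph; eauto.
Qed.

Theorem theorem5p4 (V : vocab) (P : sproblem V) :
  is_sproblem P -> FBPI_proof P -> safe P.
Proof.
  intros _ H; apply soundness; auto.
Qed.
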